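(* Let $\mathcal{C}$ be a strict monoidal category with a pre-braiding $\sigma$, and let $\mathcal{C}_\sigma$ be the subcategory defined below. Then $\mathcal{C}_\sigma$ is a braided monoidal category with braiding $\sigma$.
   Context: A pre-braiding is a family of morphisms $\sigma_{A,B}\colon A\otimes B\to B\otimes A$, $A,B\in\mathrm{Ob}\,\mathcal{C}$, satisfying the Yang–Baxter equation $(\mathrm{id}_C\otimes\sigma_{A,B})(\sigma_{A,C}\otimes\mathrm{id}_B)(\mathrm{id}_A\otimes\sigma_{B,C})=(\sigma_{B,C}\otimes\mathrm{id}_A)(\mathrm{id}_B\otimes\sigma_{A,C})(\sigma_{A,B}\otimes\mathrm{id}_C)$ and the hexagon identities $\sigma_{A\otimes B,C}=(\sigma_{A,C}\otimes\mathrm{id}_B)(\mathrm{id}_A\otimes\sigma_{B,C})$, $\sigma_{C,A\otimes B}=(\mathrm{id}_A\otimes\sigma_{C,B})(\sigma_{C,A}\otimes\mathrm{id}_B)$, but not necessarily natural. A braiding is a pre-braiding that is natural: $(g\otimes f)\circ\sigma_{A,B}=\sigma_{A',B'}\circ(f\otimes g)$ for all morphisms $f\colon A\to A'$, $g\colon B\to B'$. $\mathcal{C}_\sigma$ has the same objects as $\mathcal{C}$, and $f\in\mathrm{Hom}_\mathcal{C}(A,B)$ is a morphism of $\mathcal{C}_\sigma$ iff $\sigma_{B,C}\circ(f\otimes\mathrm{id}_C)=(\mathrm{id}_C\otimes f)\circ\sigma_{A,C}$ and $(f\otimes\mathrm{id}_C)\circ\sigma_{C,A}=\sigma_{C,B}\circ(\mathrm{id}_C\otimes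 f)$ for all $C\in\mathrm{Ob}\,\mathcal{C}$. *)

(* Defs.v *)
(* A (small) category is presented in single-sorted form: a type of objects,
   a type of all morphisms with domain/codomain maps, identities and a
   composition [comp f g] = f ∘ g (only constrained when cod g = dom f).
   This lets strictness (A⊗B)⊗C = A⊗(B⊗C), (f⊗g)⊗h = f⊗(g⊗h) be stated as
   plain equalities without transport. *)

Record StrictMonoidalCategory := {
  Obj : Type;
  Mor : Type;
  dom : Mor -> Obj;
  cod : Mor -> Obj;
  idm : Obj -> Mor;
  comp : Mor -> Mor -> Mor;
  tobj : Obj -> Obj -> Obj;
  tmor : Mor -> Mor -> Mor;
  unit : Obj;
  dom_id : forall A, dom (idm A) = A;
  cod_id : forall A, cod (idm A) = A;
  dom_comp : forall f g, cod g = dom f -> dom (comp f g) = dom g;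
  cod_comp : forall f g, cod g = dom f -> cod (comp f g) = cod f;
  comp_id_l : forall f, comp (idm (cod f)) f = f;
  comp_id_r : forall f, comp f (idm (dom f)) = f;
  comp_assoc : forall f g h, cod h = dom g -> cod g = dom f ->
      comp f (comp g h) = comp (comp f g) h;
  dom_tmor : forall f g, dom (tmor f g) = tobj (dom f) (dom g);
  cod_tmor : forall f g, cod (tmor f g) = tobj (cod f) (cod g);
  tmor_id : forall A B, tmor (idm A) (idm B) = idm (tobj A B);
  tmor_comp : forall f f' g g', cod f' = dom f -> cod g' = dom g ->
      tmor (comp f f') (comp g g') = comp (tmor f g) (tmor f' g');
  tobj_assoc : forall A B C, tobj (tobj A B) C = tobj A (tobj B C);
  tmor_assoc : forall f g h, tmor (tmor f g) h = tmor f (tmor g h);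
  tobj_unit_l : forall A, tobj unit A = A;
  tobj_unit_r : forall A, tobj A unit = A;
  tmor_unit_l : forall f, tmor (idm unit) f = f;
  tmor_unit_r : forall f, tmor f (idm unit) = f
}.

Arguments dom {_}. Arguments cod {_}. Arguments idm {_}. Arguments comp {_}.
Arguments tobj {_}. Arguments tmor {_}. Arguments unit {_}.

Section Braid.
Variable C : StrictMonoidalCategory.

(* Pre-braiding: family of morphisms σ_{A,B} : A⊗B -> B⊗A satisfying
   Yang–Baxter and the two hexagon identities (not necessarily natural). *)
Definition is_prebraiding (s : Obj C -> Obj C -> Mor C) : Prop :=
  (forall A B, dom (s A B) = tobj A B /\ cod (s A B) = tobj B A) /\
  (forall A B D,
     comp (tmor (idm D) (s A B)) (comp (tmor (s A D) (idm B)) (tmor (idm A) (s B D)))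
     = comp (tmor (s B D) (idm A)) (comp (tmor (idm B) (s A D)) (tmor (s A B) (idm D)))) /\
  (forall A B D, s (tobj A B) D = comp (tmor (s A D) (idm B)) (tmor (idm A) (s B D))) /\
  (forall A B D, s D (tobj A B) = comp (tmor (idm A) (s D B)) (tmor (s D A) (idm B))).

Definition natural_on (P : Mor C -> Prop) (s : Obj C -> Obj C -> Mor C) : Prop :=
  forall f g, P f -> P g ->
    comp (tmor g f) (s (dom f) (dom g)) = comp (s (cod f) (cod g)) (tmor f g).

Definition in_Csigma (s : Obj C -> Obj C -> Mor C) (f : Mor C) : Prop :=
  forall D : Obj C,
    comp (s (cod f) D) (tmor f (idm D)) = comp (tmor (idm D) f) (s (dom f) D) /\
    comp (tmor f (idm D)) (s D (dom f)) = comp (s D (cod f)) (tmor (idm D) f).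

(* P (a class of morphisms, with all objects) forms a subcategory. *)
Definition is_subcategory (P : Mor C -> Prop) : Prop :=
  (forall A, P (idm A)) /\
  (forall f g, cod g = dom f -> P f -> P g -> P (comp f g)).

(* ... a (strict) monoidal subcategory: closed under ⊗ of morphisms
   (it contains all objects, in particular the unit, and inherits the
   strict associativity / unit laws). *)
Definition is_monoidal_subcategory (P : Mor C -> Prop) : Prop :=
  is_subcategory P /\ (forall f g, P f -> P g -> P (tmor f g)).

Definition is_braided_monoidal_subcategory (P : Mor C -> Prop)
    (s : Obj C -> Obj C -> Mor C) : Prop :=
  is_monoidal_subcategory P /\
  (forall A B, P (s A B)) /\
  is_prebraiding s /\
  natural_on P s.

End Braid.

(* Main.v *)
Require Import Defs.
Ltac dc :=
  repeat match goal with
  | |- context [dom (comp ?f ?g)] => rewrite (dom_comp _ f g) by dc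
  | |- context [cod (comp ?f ?g)] => rewrite (cod_comp _ f g) by dc
  | |- context [dom (tmor _ _)] => rewrite dom_tmor
  | |- context [cod (tmor _ _)] => rewrite cod_tmor
  | |- context [dom (idm _)] => rewrite dom_id
  | |- context [cod (idm _)] => rewrite cod_id
  | H : forall a b, dom (?s a b) = _ |- context [dom (?s _ _)] => rewrite H
  | H : forall a b, cod (?s a b) = _ |- context [cod (?s _ _)] => rewrite H
  end; rewrite ?tobj_assoc; first [reflexivity | assumption | congruence].
Lemma idl (C : StrictMonoidalCategory) (f : Mor C) A : cod f = A -> comp (idm A) f = f.
Proof. intros <-; apply comp_id_l. Qed.
Lemma idr (C : StrictMonoidalCategory) (f : Mor C) A : dom f = A -> comp f (idm A) = f.
Proof. intros <-; apply comp_id_r. Qed.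
Ltac asr := rewrite (comp_assoc _) by dc.
Ltac asl := rewrite <- (comp_assoc _) by dc.

Lemma tensor1 (C : StrictMonoidalCategory) (s : Obj C -> Obj C -> Mor C)
  (Hsd : forall a b, dom (s a b) = tobj a b) (Hsc : forall a b, cod (s a b) = tobj b a)
  (f g : Mor C) (A B A' B' D : Obj C) (hfd : dom f = A) (hfc : cod f = B)
  (hgd : dom g = A') (hgc : cod g = B')
  (Pf1 : comp (s B D) (tmor f (idm D)) = comp (tmor (idm D) f) (s A D))
  (Pg1 : comp (s B' D) (tmor g (idm D)) = comp (tmor (idm D) g) (s A' D)) :
  comp (comp (tmor (s B D) (idm B')) (tmor (idm B) (s B' D))) (tmor (tmor f g) (idm D))
  = comp (tmor (idm D) (tmor f g)) (comp (tmor (s A D) (idm A')) (tmor (idm A) (s A' D))).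
Proof.
  transitivity (comp (tmor (s B D) (idm B')) (comp (tmor (idm B) (s B' D)) (tmor f (tmor g (idm D))))).
  { rewrite tmor_assoc. asl. reflexivity. }
  transitivity (comp (tmor (s B D) (idm B')) (tmor f (comp (tmor (idm D) g) (s A' D)))).
  { rewrite <- (tmor_comp _ (idm B) f) by dc. rewrite idl by dc. rewrite Pg1. reflexivity. }
  transitivity (comp (tmor (s B D) (idm B')) (comp (tmor f (tmor (idm D) g)) (tmor (idm A) (s A' D)))).
  { rewrite <- (tmor_comp _ f (idm A)) by dc. rewrite idr by dc. reflexivity. }
  transitivity (comp (tmor (comp (tmor (idm D) f) (s A D)) g) (tmor (idm A) (s A' D))).
  { rewrite <- tmor_assoc. asr. rewrite <- (tmor_comp _ (s B D) (tmor f (idm D))) by dc.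
    rewrite Pf1, idl by dc. reflexivity. }
  transitivity (comp (comp (tmor (tmor (idm D) f) g) (tmor (s A D) (idm A'))) (tmor (idm A) (s A' D))).
  { rewrite <- (tmor_comp _ (tmor (idm D) f) (s A D)) by dc. rewrite idr by dc. reflexivity. }
  rewrite tmor_assoc. asl. reflexivity.
Qed.

Lemma tensor2 (C : StrictMonoidalCategory) (s : Obj C -> Obj C -> Mor C)
  (Hsd : forall a b, dom (s a b) = tobj a b) (Hsc : forall a b, cod (s a b) = tobj b a)
  (f g : Mor C) (A B A' B' D : Obj C) (hfd : dom f = A) (hfc : cod f = B)
  (hgd : dom g = A') (hgc : cod g = B')
  (Pf2 : comp (tmor f (idm D)) (s D A) = comp (s D B) (tmor (idm D) f))
  (Pg2 : comp (tmor g (idm D)) (s D A') = comp (s D B') (tmor (idm D) g)) :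
  comp (tmor (tmor f g) (idm D)) (comp (tmor (idm A) (s D A')) (tmor (s D A) (idm A')))
  = comp (comp (tmor (idm B) (s D B')) (tmor (s D B) (idm B'))) (tmor (idm D) (tmor f g)).
Proof.
  transitivity (comp (comp (tmor f (tmor g (idm D))) (tmor (idm A) (s D A'))) (tmor (s D A) (idm A'))).
  { rewrite tmor_assoc. asr. reflexivity. }
  transitivity (comp (tmor f (comp (s D B') (tmor (idm D) g))) (tmor (s D A) (idm A'))).
  { rewrite <- (tmor_comp _ f (idm A)) by dc. rewrite idr by dc. rewrite Pg2. reflexivity. }
  transitivity (comp (comp (tmor (idm B) (s D B')) (tmor f (tmor (idm D) g))) (tmor (s D A) (idm A'))).
  { rewrite <- (tmor_comp _ (idm B) f) by dc. rewrite idl by dc. reflexivity. }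
  transitivity (comp (tmor (idm B) (s D B')) (tmor (comp (s D B) (tmor (idm D) f)) g)).
  { rewrite <- tmor_assoc. asl. rewrite <- (tmor_comp _ (tmor f (idm D)) (s D A)) by dc.
    rewrite Pf2, idr by dc. reflexivity. }
  transitivity (comp (tmor (idm B) (s D B')) (comp (tmor (s D B) (idm B')) (tmor (tmor (idm D) f) g))).
  { rewrite <- (tmor_comp _ (s D B) (tmor (idm D) f)) by dc. rewrite idl by dc. reflexivity. }
  rewrite tmor_assoc. asr. reflexivity.
Qed.

Lemma natl (C : StrictMonoidalCategory) (s : Obj C -> Obj C -> Mor C)
  (Hsd : forall a b, dom (s a b) = tobj a b) (Hsc : forall a b, cod (s a b) = tobj b a)
  (f g : Mor C) (A B A' B' : Obj C) (hfd : dom f = A) (hfc : cod f = B)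
  (hgd : dom g = A') (hgc : cod g = B')
  (Pf1 : comp (s B B') (tmor f (idm B')) = comp (tmor (idm B') f) (s A B'))
  (Pg2 : comp (tmor g (idm A)) (s A A') = comp (s A B') (tmor (idm A) g)) :
  comp (tmor g f) (s A A') = comp (s B B') (tmor f g).
Proof.
  transitivity (comp (comp (tmor (idm B') f) (tmor g (idm A))) (s A A')).
  { rewrite <- (tmor_comp _ (idm B') g) by dc. rewrite idl, idr by dc. reflexivity. }
  asl. rewrite Pg2. asr. rewrite <- Pf1. asl.
  rewrite <- (tmor_comp _ f (idm A)) by dc. rewrite idl, idr by dc. reflexivity.
Qed.

Theorem proposition5p9 (C : StrictMonoidalCategory)
    (s : Obj C -> Obj C -> Mor C) (Hs : is_prebraiding C s) :
  is_braided_monoidal_subcategory C (in_Csigma C s) s.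
Proof.
  pose proof Hs as Hs'.
  destruct Hs' as [Hdc [YB [H3 H4]]].
  assert (Hsd : forall a b, dom (s a b) = tobj a b) by (intros; apply Hdc).
  assert (Hsc : forall a b, cod (s a b) = tobj b a) by (intros; apply Hdc).
  assert (IDI : forall A : Obj C, comp (idm A) (idm A) = idm A) by (intros; apply idl; dc).
  split; [split; [split|] | split; [|split; [exact Hs|]]].
  - intros A D. rewrite dom_id, cod_id, !tmor_id.
    rewrite idr by dc. rewrite idl by dc. rewrite idl by dc. rewrite idr by dc. split; reflexivity.
  - intros f g Hfg Pf Pg D.
    destruct (Pf D) as [Pf1 Pf2]; destruct (Pg D) as [Pg1 Pg2]; rewrite Hfg in Pg1, Pg2.
    rewrite (cod_comp _ f g) by dc. rewrite (dom_comp _ f g) by dc.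
    rewrite <- (IDI D). rewrite !(tmor_comp _) by dc. split.
    + asr. rewrite Pf1. asl. rewrite Pg1. asr. reflexivity.
    + asl. rewrite Pg2. asr. rewrite Pf2. asl. reflexivity.
  - intros f g Pf Pg D.
    destruct (Pf D) as [Pf1 Pf2]; destruct (Pg D) as [Pg1 Pg2].
    rewrite !dom_tmor, !cod_tmor, (H3 (dom f) (dom g) D), (H3 (cod f) (cod g) D),
      (H4 (dom f) (dom g) D), (H4 (cod f) (cod g) D).
    split.
    + apply tensor1; auto.
    + apply tensor2; auto.
  - intros A B D. rewrite Hsc, Hsd, (H3 B A D), (H3 A B D), (H4 A B D), (H4 B A D). split.
    + asl. symmetry. apply YB.
    + asl. symmetry. apply YB.
  - intros f g Pf Pg. apply natl; auto.
    + apply (Pf (cod g)).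
    + apply (Pg (dom f)).
Qed.
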